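(* Let $n,q$ be positive integers and let $f_{n,q}:\mathbb{C}^3\to\mathbb{C}$ be the polynomial $f_{n,q}(x,y,z)=x-3x^{2n+1}y^{2q}+2x^{3n+1}y^{3q}+yz$. Then there exists a polynomial automorphism $P=(P_1,P_2,P_3):\mathbb{C}^3\to\mathbb{C}^3$ (a polynomial map with polynomial inverse) such that $f_{n,q}=P_1$. *)

(* Defs.v *)
From mathcomp Require Import all_boot all_algebra.
From mathcomp Require Import reals.
From mathcomp Require Import complex.
From mathcomp Require Import mpoly.
Import GRing.Theory.

Set Implicit Arguments.
Unset Strict Implicit.
Unset Printing Implicit Defensive.

Local Open Scope ring_scope.

Definition poly_automorphism (K : nzRingType) (m : nat)
  (P : m.-tuple {mpoly K[m]}) : Prop :=
  exists Q : m.-tuple {mpoly K[m]},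
    (forall i : 'I_m, comp_mpoly Q (tnth P i) = 'X_i) /\
    (forall i : 'I_m, comp_mpoly P (tnth Q i) = 'X_i).

Definition f_nq (K : nzRingType) (n q : nat) : {mpoly K[3]} :=
  'X_0 - 3%:R * ('X_0 ^+ (2 * n + 1) * 'X_1 ^+ (2 * q))
       + 2%:R * ('X_0 ^+ (3 * n + 1) * 'X_1 ^+ (3 * q))
       + 'X_1 * 'X_2.

(* Main.v *)
Require Import Defs.
From mathcomp Require Import all_boot all_algebra.
From mathcomp Require Import reals.
From mathcomp Require Import complex.
From mathcomp Require Import mpoly.
From mathcomp Require Import ring zify.
Local Open Scope ring_scope.
Import GRing.Theory.

Section Aux.
Variable R : realType.
Local Notation K := (R[i]).
Variables n q : nat.
Definition G (a b : {mpoly K[3]}) : {mpoly K[3]} :=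
  - 3%:R * (a ^+ (2 * n + 1) * b ^+ (2 * q + 1))
  + 2%:R * (a ^+ (3 * n + 1) * b ^+ (3 * q + 2)).

Lemma compG (t : 3.-tuple {mpoly K[3]}) a b :
  comp_mpoly t (G a b) = G (comp_mpoly t a) (comp_mpoly t b).
Proof. rewrite /G !(rmorphD, rmorphN, rmorphM, rmorphXn, rmorph_nat, rmorphN1, rmorph1). ring. Qed.

Lemma compM (t : 3.-tuple {mpoly K[3]}) a b :
  comp_mpoly t (a * b) = comp_mpoly t a * comp_mpoly t b.
Proof. exact: rmorphM. Qed.
End Aux.
Arguments G {R}.


Theorem mainTheorem1 (R : realType) (n q : nat) (hn : (0 < n)%N) (hq : (0 < q)%N) :
  exists P : 3.-tuple {mpoly R[i][3]},
    poly_automorphism P /\ tnth P ord0 = f_nq (R[i]) n q.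
Proof.
case: q hq => [//|q'] _.
set X0 : {mpoly R[i][3]} := 'X_0.
set X1 : {mpoly R[i][3]} := 'X_1.
set X2 : {mpoly R[i][3]} := 'X_2.
have Hf : f_nq (R[i]) n q'.+1 = X0 + X1 * G n q' X0 X1 + X1 * X2.
  rewrite /f_nq /G.
  have -> : (2 * q'.+1 = (2 * q' + 1).+1)%N by lia.
  have -> : (3 * q'.+1 = (3 * q' + 2).+1)%N by lia.
  rewrite !exprS. rewrite -/X0 -/X1 -/X2. ring.
exists [tuple f_nq (R[i]) n q'.+1; X1; X2 + G n q' X0 X1]; split; last by [].
exists [tuple X0 - X1 * X2; X1; X2 - G n q' (X0 - X1 * X2) X1]; split.
- case=> [[|[|[|//]]] ?] /=; rewrite (tnth_nth 0) /=.
  + rewrite Hf !(compG, comp_mpolyD, comp_mpolyB, comp_mpolyN, compM) /X0 /X1 /X2 !comp_mpolyXU /=. rewrite (_ : Ordinal _ = (0 : 'I_3)); last exact: val_inj.  ring.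
  + rewrite /X1 comp_mpolyXU /=. rewrite (_ : Ordinal _ = (1 : 'I_3)); last exact: val_inj.  done.
  + rewrite !(compG, comp_mpolyD, comp_mpolyB, comp_mpolyN, compM) /X0 /X1 /X2 !comp_mpolyXU /=. rewrite (_ : Ordinal _ = (2 : 'I_3)); last exact: val_inj.  ring.
- case=> [[|[|[|//]]] ?] /=; rewrite (tnth_nth 0) /=.
  + rewrite !(compG, comp_mpolyD, comp_mpolyB, comp_mpolyN, compM) /X0 /X1 /X2 !comp_mpolyXU /= -/X0 -/X1 -/X2 Hf. ring.
  + rewrite /X1 comp_mpolyXU /=. rewrite (_ : Ordinal _ = (1 : 'I_3)); last exact: val_inj.  done.
  + rewrite !(compG, comp_mpolyD, comp_mpolyB, comp_mpolyN, compM) /X0 /X1 /X2 !comp_mpolyXU /= -/X0 -/X1 -/X2.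
    have -> : f_nq (R[i]) n q'.+1 - X1 * (X2 + G n q' X0 X1) = X0 by rewrite Hf; ring.
    by rewrite addrK.
Qed.
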